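(* Let $N_1,N_2,N_3\ge0$ be integers. The Calderon transformation $C$ maps the extremal points and extremal faces of $\sigma(N_1,N_2,N_3)$ and of $Q(N_1,N_2,N_3)$ onto the extremal points and extremal faces of $\sigma_P(2N_1,2N_2,2N_3)$ and of $Q_P(2N_1,2N_2,2N_3)$, respectively.
   Context: For integers $N_1,N_2,N_3\ge0$, $\sigma(N_1,N_2,N_3)$ is the set of trigonometric polynomials $f(\alpha,\beta,\gamma)=\sum_{|k|\le N_1}\sum_{|\ell|\le N_2}\sum_{|m|\le N_3} q(k,\ell,m)e^{i(k\alpha+\ell\beta+m\gamma)}$ with $f\ge0$ for all real $\alpha,\beta,\gamma$; $Q(N_1,N_2,N_3)$ is the set of $f\in\sigma(N_1,N_2,N_3)$ of the form $\sum_{j=1}^r|F_j|^2$ with $F_j=\sum_{0\le k\le N_1,0\le\ell\le N_2,0\le m\le N_3}q_j(k,\ell,m)e^{i(k\alpha+\ell\beta+m\gamma)}$. $\sigma_P(2N_1,2N_2,2N_3)$ is the set of real polynomials $f(x,y,z)=\sum_{0\le k\le 2N_1}\sum_{0\le\ell\le2N_2}\sum_{0\le m\le 2N_3}a_{k,\ell,m}x^ky^\ell z^m$ that are nonnegative on $\mathbb R^3$; $Q_P(2N_1,2N_2,2N_3)$ is the set of those $f\in\sigma_P(2N_1,2N_2,2N_3)$ that can be written $\sum_{j=1}^r|F_j(x,y,z)|^2$ with polynomials $F_j$. The Calderon transformation is the linear map $(Cf)(x,y,z)=(x^2+1)^{N_1}(y^2+1)^{N_2}(z^2+1)^{N_3}f(\alpha,\beta,\gamma)$,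 where $e^{i\alpha}=\frac{x+i}{x-i}$, $e^{i\beta}=\frac{y+i}{y-i}$, $e^{i\gamma}=\frac{z+i}{z-i}$. An element $f$ of a convex cone $U$ is extremal (an extremal point) if whenever $f=g+h$ with $g,h\in U$, both $g,h$ are nonnegative multiples of $f$. A convex subset $D\subseteq U$ is an extremal face of $U$ if whenever a point of $D$ lies in the relative interior of a segment contained in $U$, the whole segment lies in $D$. *)

(* Defs.v *)
From HB Require Import structures.
From mathcomp Require Import all_boot all_order all_algebra.
From mathcomp Require Import all_classical all_reals all_analysis.
From mathcomp Require Import complex.

Set Implicit Arguments.
Unset Strict Implicit.
Unset Printing Implicit Defensive.

Import Order.TTheory GRing.Theory Num.Theory.
Local Open Scope ring_scope.
Local Open Scope classical_set_scope.

Section Defs.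
Variable R : realType.

Definition fun3 := R -> R -> R -> R.

Definition expi (t : R) : R[i] := (cos t +i* sin t)%C.

Definition trig_poly (N1 N2 N3 : nat) (f : fun3) : Prop :=
  exists q : int -> int -> int -> R[i],
    forall a b c : R,
      real_complex R (f a b c) =
      \sum_(k < (2 * N1).+1) \sum_(l < (2 * N2).+1) \sum_(m < (2 * N3).+1)
        q (k%:Z - N1%:Z) (l%:Z - N2%:Z) (m%:Z - N3%:Z) *
        expi ((k%:Z - N1%:Z)%:~R * a + (l%:Z - N2%:Z)%:~R * b
              + (m%:Z - N3%:Z)%:~R * c).

Definition atrig_poly (N1 N2 N3 : nat) (F : R -> R -> R -> R[i]) : Prop :=
  exists q : nat -> nat -> nat -> R[i],
    forall a b c : R,
      F a b c =
      \sum_(k < N1.+1) \sum_(l < N2.+1) \sum_(m < N3.+1)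
        q k l m * expi (k%:R * a + l%:R * b + m%:R * c).

Definition nonneg3 (f : fun3) : Prop := forall x y z : R, 0 <= f x y z.

Definition sigmaT (N1 N2 N3 : nat) : set fun3 :=
  [set f | trig_poly N1 N2 N3 f /\ nonneg3 f].

Definition QT (N1 N2 N3 : nat) : set fun3 :=
  [set f | sigmaT N1 N2 N3 f /\
     exists (r : nat) (F : 'I_r -> R -> R -> R -> R[i]),
       (forall j, atrig_poly N1 N2 N3 (F j)) /\
       forall a b c : R, real_complex R (f a b c) = \sum_(j < r) `|F j a b c| ^+ 2].

Definition poly3 (D1 D2 D3 : nat) (f : fun3) : Prop :=
  exists a : nat -> nat -> nat -> R,
    forall x y z : R,
      f x y z = \sum_(k < D1.+1) \sum_(l < D2.+1) \sum_(m < D3.+1)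
                  a k l m * x ^+ k * y ^+ l * z ^+ m.

Definition is_poly3 (f : fun3) : Prop := exists D1 D2 D3, poly3 D1 D2 D3 f.

Definition sigmaP (D1 D2 D3 : nat) : set fun3 :=
  [set f | poly3 D1 D2 D3 f /\ nonneg3 f].

Definition QP (D1 D2 D3 : nat) : set fun3 :=
  [set f | sigmaP D1 D2 D3 f /\
     exists (r : nat) (F : 'I_r -> fun3),
       (forall j, is_poly3 (F j)) /\
       forall x y z : R, f x y z = \sum_(j < r) (F j x y z) ^+ 2].

(* The angle alpha(x) = pi - 2 atan x satisfies
   e^{i alpha} = (x+i)/(x-i); since trigonometric polynomials are
   2pi-periodic this is the (unique up to 2pi) choice of angle. *)
Definition calpha (x : R) : R := pi - 2 * atan x.

Definition calderon (N1 N2 N3 : nat) (f : fun3) : fun3 :=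
  fun x y z => (x ^+ 2 + 1) ^+ N1 * (y ^+ 2 + 1) ^+ N2 * (z ^+ 2 + 1) ^+ N3
               * f (calpha x) (calpha y) (calpha z).

Definition addf (f g : fun3) : fun3 := fun x y z => f x y z + g x y z.
Definition scalef (c : R) (f : fun3) : fun3 := fun x y z => c * f x y z.
Definition segpt (g h : fun3) (t : R) : fun3 :=
  addf (scalef (1 - t) g) (scalef t h).

Definition extremal (U : set fun3) (f : fun3) : Prop :=
  U f /\
  forall g h, U g -> U h -> f = addf g h ->
    (exists c, 0 <= c /\ g = scalef c f) /\ (exists c, 0 <= c /\ h = scalef c f).

Definition convex_set (D : set fun3) : Prop :=
  forall g h t, D g -> D h -> 0 <= t <= 1 -> D (segpt g h t).

Definition extremal_face (U D : set fun3) : Prop :=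
  D `<=` U /\ convex_set D /\
  forall g h t,
    (forall s, 0 <= s <= 1 -> U (segpt g h s)) ->
    0 < t < 1 -> D (segpt g h t) ->
    forall s, 0 <= s <= 1 -> D (segpt g h s).

Definition maps_extremal_onto (T : fun3 -> fun3) (U V : set fun3) : Prop :=
  T @` [set f | extremal U f] = [set g | extremal V g] /\
  (forall D, extremal_face U D -> extremal_face V (T @` D)) /\
  (forall E, extremal_face V E -> exists D, extremal_face U D /\ E = T @` D).

End Defs.

(* Main.v *)
Require Import Defs.
From HB Require Import structures.
From mathcomp Require Import all_boot all_order all_algebra.
From mathcomp Require Import all_classical all_reals all_analysis.
From mathcomp Require Import complex polyrcf.
From mathcomp Require Import ring lra zify.

Module Helpers.
Set Implicit Arguments. Unset Strict Implicit. Unset Printing Implicit Defensive.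
Import Order.TTheory GRing.Theory Num.Theory.
Import numFieldNormedType.Exports.
Local Open Scope ring_scope.
Local Open Scope classical_set_scope.
Local Open Scope complex_scope.

Section Abstract.
Variable R : realType.
Variables (T : fun3 R -> fun3 R) (W U V : set (fun3 R)).
Hypothesis Tadd : forall f g, T (Defs.addf f g) = Defs.addf (T f) (T g).
Hypothesis Tscale : forall c f, T (Defs.scalef c f) = Defs.scalef c (T f).
Hypothesis UW : U `<=` W.
Hypothesis Wadd : forall f g, W f -> W g -> W (Defs.addf f g).
Hypothesis Wscale : forall c f, W f -> W (Defs.scalef c f).
Hypothesis Tinj : forall f g, W f -> W g -> T f = T g -> f = g.
Hypothesis TUV : T @` U = V.

Lemma Tseg g h t : T (segpt g h t) = segpt (T g) (T h) t.
Proof. by rewrite /segpt Tadd !Tscale. Qed.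

Lemma Wseg g h t : W g -> W h -> W (segpt g h t).
Proof. by move=> ? ?; apply: Wadd; apply: Wscale. Qed.

Lemma segpt0 (g h : fun3 R) : segpt g h 0 = g :> fun3 R.
Proof. by apply/funext=> x; apply/funext=> y; apply/funext=> z; rewrite /segpt /Defs.addf /Defs.scalef; ring. Qed.
Lemma segpt1 (g h : fun3 R) : segpt g h 1 = h.
Proof. by apply/funext=> x; apply/funext=> y; apply/funext=> z; rewrite /segpt /Defs.addf /Defs.scalef; ring. Qed.

Lemma VT G : V G -> exists2 g, U g & T g = G.
Proof. by rewrite -TUV => -[g Ug <-]; exists g. Qed.

Lemma TV g : U g -> V (T g).
Proof. by move=> Ug; rewrite -TUV; exists g. Qed.

Lemma abstract_maps : maps_extremal_onto T U V.
Proof.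
split; [|split].
- apply/seteqP; split.
  + move=> _ [f [Uf ext] <-]; split; first exact: TV.
    move=> G H VG VH.
    have [g Ug <-] := VT VG; have [h Uh <-] := VT VH; move=> e.
    have efgh : f = Defs.addf g h.
      apply: (Tinj (UW Uf) (Wadd (UW Ug) (UW Uh))).
      by rewrite Tadd.
    have [[c [c0 ->]] [d [d0 ->]]] := ext g h Ug Uh efgh.
    by split; [exists c| exists d]; rewrite Tscale.
  + move=> F [VF ext]; have [f Uf eF] := VT VF; exists f => //; split => //.
    move=> g h Ug Uh e.
    have e' : F = Defs.addf (T g) (T h) by rewrite -eF e Tadd.
    have [[c [c0 ec]] [d [d0 ed]]] := ext _ _ (TV Ug) (TV Uh) e'.
    have Wf : W f by exact: UW.
    split; [exists c| exists d]; split => //; apply: Tinj;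
      [exact: UW| exact: Wscale| by rewrite Tscale eF
      |exact: UW| exact: Wscale| by rewrite Tscale eF].
- move=> D [DU [Dconv Dface]]; split; [|split].
  + by move=> _ [d Dd <-]; apply: TV; apply: DU.
  + move=> _ _ t [g Dg <-] [h Dh <-] t01; exists (segpt g h t); first exact: Dconv.
    by rewrite Tseg.
  + move=> G H t segV t01 [d Dd ed].
    have [g Ug eg] : exists2 g, U g & T g = G.
      by apply: VT; rewrite -(segpt0 G H); apply: segV; rewrite lexx ler01.
    have [h Uh eh] : exists2 h, U h & T h = H.
      by apply: VT; rewrite -(segpt1 G H); apply: segV; rewrite lexx ler01.
    have useg s : 0 <= s <= 1 -> U (segpt g h s).
      move=> s01; have [u Uu eu] := VT (segV s s01).
      suff -> : segpt g h s = u by [].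
      apply: Tinj; [apply: Wseg; exact: UW| exact: UW|].
      by rewrite eu Tseg eg eh.
    have Dt : D (segpt g h t).
      suff -> : segpt g h t = d by [].
      apply: Tinj; [apply: Wseg; exact: UW| apply: UW; exact: DU|].
      by rewrite ed Tseg eg eh.
    move=> s s01; exists (segpt g h s); first exact: (Dface g h t useg t01 Dt).
    by rewrite Tseg eg eh.
- move=> E [EV [Econv Eface]].
  exists [set f | U f /\ E (T f)]; split; last first.
    apply/seteqP; split.
    + move=> e Ee; have [f Uf ef] := VT (EV _ Ee); exists f => //.
      by split => //; rewrite ef.
    + by move=> _ [f [_ Ef] <-].
  split; [|split].
  + by move=> f [].
  + move=> g h t [Ug Eg] [Uh Eh] t01.
    have Es : E (T (segpt g h t)) by rewrite Tseg; apply: Econv.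
    have [u Uu eu] := VT (EV _ Es).
    have -> : segpt g h t = u.
      apply: Tinj; [exact: (Wseg _ (UW Ug) (UW Uh))| exact: UW Uu| by rewrite eu].
    by split => //; rewrite eu.

  + move=> g h t useg t01 [_ Et] s s01; split; first exact: useg.
    rewrite Tseg; apply: (Eface (T g) (T h) t) => //.
      by move=> r r01; rewrite -Tseg; apply: TV; apply: useg.
    by rewrite -Tseg.
Qed.
End Abstract.

Section Basics.
Variable R : realType.
Local Notation C := R[i].

Lemma expiD (a b : R) : expi (a + b) = expi a * expi b.
Proof.
rewrite /expi cosD sinD; apply/eqP; rewrite eq_complex /=; apply/andP; split; apply/eqP; ring.
Qed.

Lemma expi0 : expi (0 : R) = 1.
Proof. by rewrite /expi cos0 sin0. Qed.

Lemma expiNK (a : R) : expi (- a) * expi a = 1.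
Proof. by rewrite -expiD addNr expi0. Qed.

Lemma expiMn (n : nat) (a : R) : expi (n%:R * a) = expi a ^+ n.
Proof.
elim: n => [|n IH]; first by rewrite mul0r expi0 expr0.
by rewrite -addn1 natrD mulrDl mul1r expiD IH exprD expr1.
Qed.

Lemma ReD (x y : C) : complex.Re (x + y) = complex.Re x + complex.Re y.
Proof. by case: x; case: y. Qed.
Lemma ImD (x y : C) : complex.Im (x + y) = complex.Im x + complex.Im y.
Proof. by case: x; case: y. Qed.

Lemma Re_sum (I : Type) (r : seq I) (P : pred I) (F : I -> C) :
  complex.Re (\sum_(i <- r | P i) F i) = \sum_(i <- r | P i) complex.Re (F i).
Proof. by apply: (big_morph _ ReD). Qed.
Lemma Im_sum (I : Type) (r : seq I) (P : pred I) (F : I -> C) :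
  complex.Im (\sum_(i <- r | P i) F i) = \sum_(i <- r | P i) complex.Im (F i).
Proof. by apply: (big_morph _ ImD). Qed.

Lemma ReMr (x : C) (r : R) : complex.Re (x * r%:C) = complex.Re x * r.
Proof. by case: x => a b /=; ring. Qed.
Lemma ImMr (x : C) (r : R) : complex.Im (x * r%:C) = complex.Im x * r.
Proof. by case: x => a b /=; ring. Qed.

Lemma Re_expi (q : C) (t : R) :
  complex.Re (q * expi t) = complex.Re q * cos t - complex.Im q * sin t.
Proof. by case: q => a b /=. Qed.

Lemma rcD (x y : R) : (x + y)%:C = x%:C + y%:C :> C.
Proof. by apply/eqP; rewrite eq_complex /= addr0 !eqxx. Qed.
Lemma rcM (x y : R) : (x * y)%:C = x%:C * y%:C :> C.
Proof. by apply/eqP; rewrite eq_complex /= !mulr0 !mul0r subr0 addr0 !eqxx. Qed.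
Lemma rc0 : (0 : R)%:C = 0 :> C. Proof. by []. Qed.
Lemma rc1 : (1 : R)%:C = 1 :> C. Proof. by []. Qed.
Lemma rcX (x : R) n : (x ^+ n)%:C = x%:C ^+ n :> C.
Proof. by elim: n => [|n IH]; rewrite ?expr0 // !exprS rcM IH. Qed.
Lemma rcN (x : R) : (- x)%:C = - x%:C :> C.
Proof. by apply/eqP; rewrite eq_complex /= oppr0 !eqxx. Qed.
Lemma rcB (x y : R) : (x - y)%:C = x%:C - y%:C :> C.
Proof. by rewrite rcD rcN. Qed.
Lemma rc_sum (I : Type) (r : seq I) (P : pred I) (F : I -> R) :
  (\sum_(i <- r | P i) F i)%:C = \sum_(i <- r | P i) (F i)%:C :> C.
Proof. by apply: (big_morph _ rcD rc0). Qed.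
Lemma Re_rc (x : R) : complex.Re (x%:C : C) = x. Proof. by []. Qed.
End Basics.

Section Trig.
Variable R : realType.
Local Notation C := R[i].
Local Notation fun3 := (fun3 R).

Definition trig1 (N : nat) (u : R -> R) := exists c : nat -> C, forall a,
  (u a)%:C = \sum_(k < (2 * N).+1) c k * expi ((k%:Z - N%:Z)%:~R * a).

Lemma trig_ext N1 N2 N3 (f g : fun3) : (forall a b c, f a b c = g a b c) ->
  trig_poly N1 N2 N3 f -> trig_poly N1 N2 N3 g.
Proof. by move=> e [q hq]; exists q => a b c; rewrite -e. Qed.

Lemma trig_zero N1 N2 N3 : @trig_poly R N1 N2 N3 (fun _ _ _ => 0).
Proof.
exists (fun _ _ _ => 0) => a b c.
rewrite big1 // => k _; rewrite big1 // => l _; rewrite big1 // => m _.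
by rewrite mul0r.
Qed.

Lemma trig_add N1 N2 N3 (f g : fun3) : trig_poly N1 N2 N3 f -> trig_poly N1 N2 N3 g ->
  trig_poly N1 N2 N3 (fun a b c => f a b c + g a b c).
Proof.
move=> [q hq] [p hp]; exists (fun k l m => q k l m + p k l m) => a b c.
rewrite rcD hq hp -big_split; apply: eq_bigr => k _.
rewrite -big_split; apply: eq_bigr => l _.
rewrite -big_split; apply: eq_bigr => m _.
by rewrite mulrDl.
Qed.

Lemma trig_scale N1 N2 N3 (r : R) (f : fun3) : trig_poly N1 N2 N3 f ->
  trig_poly N1 N2 N3 (fun a b c => r * f a b c).
Proof.
move=> [q hq]; exists (fun k l m => r%:C * q k l m) => a b c.
rewrite rcM hq mulr_sumr; apply: eq_bigr => k _.
rewrite mulr_sumr; apply: eq_bigr => l _.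
rewrite mulr_sumr; apply: eq_bigr => m _.
by rewrite mulrA.
Qed.

Lemma trig_sum N1 N2 N3 n (F : 'I_n -> fun3) :
  (forall i, trig_poly N1 N2 N3 (F i)) ->
  trig_poly N1 N2 N3 (fun a b c => \sum_(i < n) F i a b c).
Proof.
elim: n F => [|n IH] F hF.
  by apply: (trig_ext _ (trig_zero N1 N2 N3)) => a b c; rewrite big_ord0.
apply: (trig_ext _ (trig_add (IH (fun i => F (widen_ord (leqnSn n) i)) _) (hF ord_max))).
  by move=> a b c; rewrite big_ord_recr.
by move=> i; apply: hF.
Qed.

Lemma absz_shift (k N : nat) : absz (k%:Z - N%:Z + N%:Z) = k.
Proof. by rewrite subrK absz_nat. Qed.

Lemma trig_prod N1 N2 N3 (u v w : R -> R) :
  trig1 N1 u -> trig1 N2 v -> trig1 N3 w ->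
  trig_poly N1 N2 N3 (fun a b c => u a * v b * w c).
Proof.
move=> [c1 h1] [c2 h2] [c3 h3].
exists (fun K L M => c1 (absz (K + N1%:Z)) * c2 (absz (L + N2%:Z)) * c3 (absz (M + N3%:Z))) => a b c.
rewrite !rcM h1 h2 h3 !mulr_suml; apply: eq_bigr => k _.
rewrite -mulrA mulr_suml mulr_sumr; apply: eq_bigr => l _.
rewrite mulrA mulr_sumr; apply: eq_bigr => m _.
rewrite !absz_shift !expiD; ring.
Qed.

End Trig.

Section Half.
Variable R : realType.
Local Notation C := R[i].

Lemma two_neq0 : (2 : C) != 0.
Proof. by rewrite pnatr_eq0. Qed.

Lemma cos_expi (t : R) : (cos t)%:C = (expi t + expi (- t)) / 2.
Proof.
apply: (mulIf two_neq0); rewrite divfK ?two_neq0 //.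
rewrite /expi cosN sinN; apply/eqP; rewrite eq_complex /=.
by apply/andP; split; apply/eqP; ring.
Qed.

Lemma sin_expi (t : R) : (sin t)%:C = (expi t - expi (- t)) * (- 'i / 2).
Proof.
apply: (mulIf two_neq0); rewrite mulrA divfK ?two_neq0 //.
rewrite /expi cosN sinN; apply/eqP; rewrite eq_complex /=.
by apply/andP; split; apply/eqP; ring.
Qed.

Lemma sizeAB (a b : C) i j : size (('X - a%:P) ^+ i * ('X - b%:P) ^+ j) = (i + j).+1.
Proof.
rewrite size_Mmonic ?monic_exp ?monicXsubC // ?size_exp_XsubC; first by rewrite addnS.
by rewrite -size_poly_eq0 size_exp_XsubC.
Qed.

Lemma expandAB (a b x : C) i j n : (i + j < n)%N ->
  (x - a) ^+ i * (x - b) ^+ j =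
  \sum_(k < n) (('X - a%:P) ^+ i * ('X - b%:P) ^+ j)`_k * x ^+ k.
Proof.
move=> h; rewrite -horner_coef_wide ?sizeAB //.
by rewrite !hornerE.
Qed.

Definition hT (M i : nat) (a : R) : R := cos (a / 2) ^+ i * sin (a / 2) ^+ (M - i).

Lemma hT_analytic M i : (i <= M)%N -> exists c : nat -> C, forall a,
  (hT M i a)%:C = expi (- (M%:R * (a / 2))) * \sum_(k < M.+1) c k * expi (k%:R * a).
Proof.
move=> iM.
set P := ('X - (-1)%:P) ^+ i * ('X - 1%:P) ^+ (M - i) : {poly C}.
set K : C := (2^-1) ^+ i * (- 'i / 2) ^+ (M - i).
exists (fun k => K * P`_k) => a.
set E := expi (a / 2); set E' := expi (- (a / 2)).
have EE : E' * E = 1 by rewrite /E /E' expiNK.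
have EE2 : E * E = expi a by rewrite /E -expiD -splitr.
have hc : (cos (a / 2))%:C = E' * (E * E - (-1)) / 2.
  by rewrite cos_expi -/E -/E'; congr (_ / _); rewrite opprK mulrDr mulrA EE; ring.
have hs : (sin (a / 2))%:C = E' * (E * E - 1) * (- 'i / 2).
  by rewrite sin_expi -/E -/E'; congr (_ * _); rewrite mulrBr mulrA EE; ring.
rewrite /hT rcM !rcX hc hs.
have -> : expi (- (M%:R * (a / 2))) = E' ^+ M by rewrite -expiMn mulrN.
rewrite -(subnKC iM) exprD.
have -> : \sum_(k < (i + (M - i)).+1) K * P`_k * expi (k%:R * a) =
          K * ((E * E - (-1)) ^+ i * (E * E - 1) ^+ (M - i)).
  rewrite (expandAB _ _ _ (ltnSn _)) mulr_sumr; apply: eq_bigr => k _.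
  by rewrite EE2 expiMn mulrA.
rewrite /K !exprMn addKn; ring.
Qed.

End Half.

Section Cal.
Variable R : realType.
Local Notation C := R[i].

Lemma int_cast (k N : nat) : ((k%:Z - N%:Z)%:~R : R) = k%:R - N%:R.
Proof. by rewrite intrD intrN. Qed.

Lemma trig1_hT N i : (i <= 2 * N)%N -> trig1 N (@hT R (2 * N) i).
Proof.
move=> iN; have [c hc] := hT_analytic R iN; exists c => a.
rewrite hc mulr_sumr; apply: eq_bigr => k _.
rewrite mulrCA -expiD int_cast; congr (_ * expi _).
by rewrite natrM; field; rewrite ?pnatr_eq0.
Qed.

Lemma expi_half_pow (a : R) (k M : nat) : (k <= M)%N ->
  expi (a / 2) ^+ k * expi (- (a / 2)) ^+ (M - k) =
  expi ((k%:R - M%:R / 2) * a).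
Proof.
move=> kM; rewrite -!expiMn -expiD natrB //; congr expi; by field; rewrite ?pnatr_eq0.
Qed.

Definition rr (x : R) := Num.sqrt (1 + x ^+ 2).

Lemma rr_gt0 (x : R) : 0 < rr x.
Proof. by rewrite /rr sqrtr_gt0 ltr_pwDl ?sqr_ge0. Qed.

Lemma rr_sq (x : R) : rr x ^+ 2 = 1 + x ^+ 2.
Proof. by rewrite /rr sqr_sqrtr // addr_ge0 ?sqr_ge0. Qed.

Lemma sin_atan (x : R) : sin (atan x) = x / rr x.
Proof.
have hc := cos_atan x.
have c0 : cos (atan x) != 0 by rewrite hc invr_eq0 gt_eqF // rr_gt0.
have := atanK x; rewrite /tan => e.
by rewrite -{2}e -hc divfK.
Qed.

Lemma calpha_half (x : R) : calpha x / 2 = pi / 2 - atan x.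
Proof. by rewrite /calpha; field; rewrite ?pnatr_eq0. Qed.

Lemma cos_calpha_half (x : R) : cos (calpha x / 2) = x / rr x.
Proof.
by rewrite calpha_half -cosN opprB cosBpihalf sin_atan.
Qed.

Lemma sin_calpha_half (x : R) : sin (calpha x / 2) = (rr x)^-1.
Proof.
by rewrite calpha_half -[pi / 2 - _]opprB sinN sinBpihalf opprK cos_atan.
Qed.

Lemma hT_calpha N i (x : R) : (i <= N)%N -> rr x ^+ N * hT N i (calpha x) = x ^+ i.
Proof.
move=> iN; rewrite /hT cos_calpha_half sin_calpha_half.
have r0 : rr x != 0 by rewrite gt_eqF // rr_gt0.
rewrite -{1}(subnKC iN) exprD exprMn exprVn.
have u0 : rr x ^+ i != 0 by rewrite expf_neq0.
have v0 : rr x ^+ (N - i) != 0 by rewrite expf_neq0.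
rewrite exprVn; set u := rr x ^+ i; set v := rr x ^+ (N - i); set w := x ^+ i; by field; apply/andP; split.
Qed.

Lemma hT_calpha2 N i (x : R) : (i <= 2 * N)%N ->
  (x ^+ 2 + 1) ^+ N * hT (2 * N) i (calpha x) = x ^+ i.
Proof.
by move=> iN; rewrite -(hT_calpha x iN) exprM rr_sq addrC.
Qed.

Lemma expi_calpha_half (x : R) : expi (calpha x / 2) = (x%:C + 'i) / (rr x)%:C.
Proof.
rewrite /expi cos_calpha_half sin_calpha_half.
have r0 : rr x != 0 by rewrite gt_eqF // rr_gt0.
have r0' : (rr x)%:C != 0 :> C by rewrite -rc0 (inj_eq (@complexI _)).
apply: (mulIf r0'); rewrite divfK //.
apply/eqP; rewrite eq_complex /=; apply/andP; split; apply/eqP; field; exact: r0.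
Qed.

Lemma expi_calpha_halfN (x : R) : expi (- (calpha x / 2)) = (x%:C - 'i) / (rr x)%:C.
Proof.
rewrite /expi cosN sinN cos_calpha_half sin_calpha_half.
have r0 : rr x != 0 by rewrite gt_eqF // rr_gt0.
have r0' : (rr x)%:C != 0 :> C by rewrite -rc0 (inj_eq (@complexI _)).
apply: (mulIf r0'); rewrite divfK //.
apply/eqP; rewrite eq_complex /=; apply/andP; split; apply/eqP; field; exact: r0.
Qed.

Lemma calpha_mono (x : R) (k M : nat) : (k <= M)%N ->
  (rr x ^+ M)%:C * expi ((k%:R - M%:R / 2) * calpha x) =
  (x%:C - - 'i) ^+ k * (x%:C - 'i) ^+ (M - k).
Proof.
move=> kM; rewrite -expi_half_pow // expi_calpha_half expi_calpha_halfN.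
have r0' : (rr x)%:C != 0 :> C by rewrite -rc0 (inj_eq (@complexI _)) gt_eqF // rr_gt0.
rewrite rcX -{1}(subnKC kM) exprD !exprMn !exprVn opprK.
set A := (x%:C + 'i) ^+ k; set B := (x%:C - 'i) ^+ (M - k).
set u := (rr x)%:C ^+ k; set v := (rr x)%:C ^+ (M - k).
have u0 : u != 0 by rewrite expf_neq0.
have v0 : v != 0 by rewrite expf_neq0.
by field; rewrite u0 v0.
Qed.

End Cal.

Section CPoly.
Variable R : realType.
Local Notation C := R[i].

Definition cpoly3 (D1 D2 D3 : nat) (G : R -> R -> R -> C) :=
  exists a : nat -> nat -> nat -> C, forall x y z : R,
    G x y z = \sum_(k < D1.+1) \sum_(l < D2.+1) \sum_(m < D3.+1)
                a k l m * x%:C ^+ k * y%:C ^+ l * z%:C ^+ m.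

Lemma cpoly3_ext D1 D2 D3 (G H : R -> R -> R -> C) :
  (forall x y z, G x y z = H x y z) -> cpoly3 D1 D2 D3 G -> cpoly3 D1 D2 D3 H.
Proof. by move=> e [a ha]; exists a => x y z; rewrite -e. Qed.

Lemma cpoly3_zero D1 D2 D3 : cpoly3 D1 D2 D3 (fun _ _ _ => 0).
Proof.
exists (fun _ _ _ => 0) => x y z.
rewrite big1 // => k _; rewrite big1 // => l _; rewrite big1 // => m _.
by rewrite !mul0r.
Qed.

Lemma cpoly3_add D1 D2 D3 G H : cpoly3 D1 D2 D3 G -> cpoly3 D1 D2 D3 H ->
  cpoly3 D1 D2 D3 (fun x y z => G x y z + H x y z).
Proof.
move=> [a ha] [b hb]; exists (fun k l m => a k l m + b k l m) => x y z.
rewrite ha hb -big_split; apply: eq_bigr => k _.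
rewrite -big_split; apply: eq_bigr => l _.
rewrite -big_split; apply: eq_bigr => m _.
by rewrite !mulrDl.
Qed.

Lemma cpoly3_scale D1 D2 D3 (c : C) G : cpoly3 D1 D2 D3 G ->
  cpoly3 D1 D2 D3 (fun x y z => c * G x y z).
Proof.
move=> [a ha]; exists (fun k l m => c * a k l m) => x y z.
rewrite ha mulr_sumr; apply: eq_bigr => k _.
rewrite mulr_sumr; apply: eq_bigr => l _.
rewrite mulr_sumr; apply: eq_bigr => m _.
by rewrite !mulrA.
Qed.

Lemma cpoly3_sum D1 D2 D3 n (F : 'I_n -> R -> R -> R -> C) :
  (forall i, cpoly3 D1 D2 D3 (F i)) ->
  cpoly3 D1 D2 D3 (fun x y z => \sum_(i < n) F i x y z).
Proof.
elim: n F => [|n IH] F hF.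
  by apply: (cpoly3_ext _ (cpoly3_zero D1 D2 D3)) => a b c; rewrite big_ord0.
apply: (cpoly3_ext _ (cpoly3_add (IH (fun i => F (widen_ord (leqnSn n) i)) _) (hF ord_max))).
  by move=> a b c; rewrite big_ord_recr.
by move=> i; apply: hF.
Qed.

Lemma cpoly3_prod D1 D2 D3 (P Q S : {poly C}) :
  (size P <= D1.+1)%N -> (size Q <= D2.+1)%N -> (size S <= D3.+1)%N ->
  cpoly3 D1 D2 D3 (fun x y z => P.[x%:C] * Q.[y%:C] * S.[z%:C]).
Proof.
move=> hP hQ hS; exists (fun k l m => P`_k * Q`_l * S`_m) => x y z.
rewrite (horner_coef_wide _ hP) (horner_coef_wide _ hQ) (horner_coef_wide _ hS).
rewrite !mulr_suml; apply: eq_bigr => k _.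
rewrite -mulrA mulr_suml mulr_sumr; apply: eq_bigr => l _.
rewrite mulrA mulr_sumr; apply: eq_bigr => m _.
ring.
Qed.

Lemma poly3_ext D1 D2 D3 (g h : fun3 R) : (forall x y z, g x y z = h x y z) ->
  poly3 D1 D2 D3 g -> poly3 D1 D2 D3 h.
Proof. by move=> e [a ha]; exists a => x y z; rewrite -e. Qed.

Lemma cpoly3_Re D1 D2 D3 G : cpoly3 D1 D2 D3 G ->
  poly3 D1 D2 D3 (fun x y z => complex.Re (G x y z)).
Proof.
move=> [a ha]; exists (fun k l m => complex.Re (a k l m)) => x y z.
rewrite ha Re_sum; apply: eq_bigr => k _.
rewrite Re_sum; apply: eq_bigr => l _.
rewrite Re_sum; apply: eq_bigr => m _.
rewrite -!rcX -!mulrA -!rcM; by case: (a k l m) => u v /=; ring.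
Qed.

Lemma cpoly3_Im D1 D2 D3 G : cpoly3 D1 D2 D3 G ->
  poly3 D1 D2 D3 (fun x y z => complex.Im (G x y z)).
Proof.
move=> [a ha]; exists (fun k l m => complex.Im (a k l m)) => x y z.
rewrite ha Im_sum; apply: eq_bigr => k _.
rewrite Im_sum; apply: eq_bigr => l _.
rewrite Im_sum; apply: eq_bigr => m _.
rewrite -!rcX -!mulrA -!rcM; by case: (a k l m) => u v /=; ring.
Qed.

Definition Pk (k M : nat) : {poly C} := ('X - (- 'i)%:P) ^+ k * ('X - 'i%:P) ^+ (M - k).

Lemma size_Pk k M : (k <= M)%N -> (size (Pk k M) <= M.+1)%N.
Proof. by move=> kM; rewrite /Pk sizeAB subnKC. Qed.

Lemma Pk_calpha (x : R) (k M : nat) : (k <= M)%N ->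
  (rr x ^+ M)%:C * expi ((k%:R - M%:R / 2) * calpha x) = (Pk k M).[x%:C].
Proof. by move=> kM; rewrite calpha_mono // /Pk !hornerE. Qed.

Lemma rr_pow2 (x : R) N : rr x ^+ (2 * N) = (x ^+ 2 + 1) ^+ N.
Proof. by rewrite exprM rr_sq addrC. Qed.

Lemma trig_calderon N1 N2 N3 (f : fun3 R) : trig_poly N1 N2 N3 f ->
  poly3 (2 * N1) (2 * N2) (2 * N3) (calderon N1 N2 N3 f).
Proof.
move=> [q hq].
set G := fun x y z : R => \sum_(k < (2 * N1).+1) \sum_(l < (2 * N2).+1) \sum_(m < (2 * N3).+1)
   q (k%:Z - N1%:Z) (l%:Z - N2%:Z) (m%:Z - N3%:Z) *
   ((Pk k (2 * N1)).[x%:C] * (Pk l (2 * N2)).[y%:C] * (Pk m (2 * N3)).[z%:C]).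
have cG : cpoly3 (2 * N1) (2 * N2) (2 * N3) G.
  apply: cpoly3_sum => k; apply: cpoly3_sum => l; apply: cpoly3_sum => m.
  apply: cpoly3_scale; apply: cpoly3_prod; apply: size_Pk.
  - by rewrite -ltnS.
  - by rewrite -ltnS.
  - by rewrite -ltnS.
apply: (poly3_ext _ (cpoly3_Re cG)) => x y z.
suff -> : G x y z = (calderon N1 N2 N3 f x y z)%:C by [].
rewrite /calderon !rcM hq -!rr_pow2 !rcX.
rewrite mulr_sumr; apply: eq_bigr => k _.
rewrite mulr_sumr; apply: eq_bigr => l _.
rewrite mulr_sumr; apply: eq_bigr => m _.
have hk : (k <= 2 * N1)%N by rewrite -ltnS.
have hl : (l <= 2 * N2)%N by rewrite -ltnS.
have hm : (m <= 2 * N3)%N by rewrite -ltnS.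
rewrite -(Pk_calpha x hk) -(Pk_calpha y hl) -(Pk_calpha z hm) !expiD !rcX !int_cast.
have e : forall (j N : nat), (j%:R - N%:R : R) = j%:R - (2 * N)%:R / 2.
  by move=> j N; rewrite natrM; field; rewrite ?pnatr_eq0.
rewrite -!e; ring.
Qed.

End CPoly.

Section Cont.
Variable R : realType.
Local Notation C := R[i].

Lemma cont_term (A B K d p : R) :
  (fun t => A * cos (K * t + d) - B * sin (K * t + d)) @ p -->
  (A * cos (K * p + d) - B * sin (K * p + d)).
Proof.
have hl : (fun t => K * t + d) @ p --> K * p + d.
  apply: cvgD; last exact: cvg_cst.
  by apply: cvgM; [exact: cvg_cst| exact: cvg_id].
have hc : (fun t => cos (K * t + d)) @ p --> cos (K * p + d).
  have h := cvg_comp _ cos hl (@continuous_cos R _). exact: h.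
have hs : (fun t => sin (K * t + d)) @ p --> sin (K * p + d).
  have h := cvg_comp _ sin hl (@continuous_sin R _). exact: h.
apply: cvgB; apply: cvgM => //; exact: cvg_cst.
Qed.


Lemma expi_rep (a : R) : exists a', 0 <= a' < pi *+ 2 /\ expi a' = expi a.
Proof.
have c1 : -1 <= cos a <= 1 by rewrite cos_geN1 cos_le1.
have hs : Num.sqrt (1 - cos a ^+ 2) = `|sin a| by rewrite -sin2cos2 sqrtr_sqr.
have pi0 := pi_gt0 R.
have [s0|s0] := leP 0 (sin a).
- exists (acos (cos a)); split.
    rewrite acos_ge0 //=; apply: (le_lt_trans (acos_lepi c1)).
    by rewrite mulr2n ltrDr.
  rewrite /expi acosK ?in_itv //= sin_acos // hs ger0_norm //.
- exists (pi *+ 2 - acos (cos a)); split.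
    rewrite subr_ge0 ltrBlDr ltrDl; apply/andP; split.
      by apply: (le_trans (acos_lepi c1)); rewrite mulr2n lerDr ltW.
    apply: acos_gt0; case/andP: c1 => -> /= c1.
    rewrite lt_neqAle c1 andbT; apply/negP => /eqP e.
    have := cos2Dsin2 a; rewrite e expr1n => h.
    have : sin a ^+ 2 = 0 by rewrite -(addKr 1 (sin a ^+ 2)) h addNr.
    by move/eqP; rewrite sqrf_eq0 => /eqP s00; move: s0; rewrite s00 ltxx.
  rewrite /expi addrC cosD2pi sinD2pi cosN sinN acosK ?in_itv //= sin_acos // hs.
  by rewrite ltr0_norm // opprK.
Qed.

Lemma expi_int_eq (a a' : R) (k N : nat) : expi a' = expi a ->
  expi ((k%:Z - N%:Z)%:~R * a') = expi ((k%:Z - N%:Z)%:~R * a).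
Proof.
move=> e; rewrite !int_cast !mulrBl !expiD -!mulrN !expiMn -!expiMn.
have eN : expi (- a') = expi (- a).
  by rewrite /expi !cosN !sinN; move: e; rewrite /expi => -[-> ->].
by rewrite !expiMn e eN.
Qed.

Lemma trig_expi_eq N1 N2 N3 (f : fun3 R) a b c a' b' c' :
  trig_poly N1 N2 N3 f -> expi a' = expi a -> expi b' = expi b -> expi c' = expi c ->
  f a' b' c' = f a b c.
Proof.
move=> [q hq] ea eb ec; apply: (@complexI R); rewrite !hq.
apply: eq_bigr => k _; apply: eq_bigr => l _; apply: eq_bigr => m _.
by rewrite !expiD (expi_int_eq _ _ ea) (expi_int_eq _ _ eb) (expi_int_eq _ _ ec).
Qed.

Lemma trig_real N1 N2 N3 (f : fun3 R) : trig_poly N1 N2 N3 f ->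
  exists q : int -> int -> int -> C, forall a b c, f a b c =
    \sum_(k < (2 * N1).+1) \sum_(l < (2 * N2).+1) \sum_(m < (2 * N3).+1)
      (complex.Re (q (k%:Z - N1%:Z) (l%:Z - N2%:Z) (m%:Z - N3%:Z)) *
        cos ((k%:Z - N1%:Z)%:~R * a + (l%:Z - N2%:Z)%:~R * b + (m%:Z - N3%:Z)%:~R * c)
     - complex.Im (q (k%:Z - N1%:Z) (l%:Z - N2%:Z) (m%:Z - N3%:Z)) *
        sin ((k%:Z - N1%:Z)%:~R * a + (l%:Z - N2%:Z)%:~R * b + (m%:Z - N3%:Z)%:~R * c)).
Proof.
move=> [q hq]; exists q => a b c.
rewrite -[f a b c]/(complex.Re ((f a b c)%:C)) hq Re_sum; apply: eq_bigr => k _.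
rewrite Re_sum; apply: eq_bigr => l _.
rewrite Re_sum; apply: eq_bigr => m _.
exact: Re_expi.
Qed.

Lemma trig_cont N1 N2 N3 (f : fun3 R) (a b c : R) : trig_poly N1 N2 N3 f ->
  continuous (fun t => f (a + t) (b + t) (c + t)).
Proof.
move=> /trig_real [q hq].
have -> : (fun t => f (a + t) (b + t) (c + t)) = (fun t =>
    \sum_(k < (2 * N1).+1) \sum_(l < (2 * N2).+1) \sum_(m < (2 * N3).+1)
      (complex.Re (q (k%:Z - N1%:Z) (l%:Z - N2%:Z) (m%:Z - N3%:Z)) *
        cos (((k%:Z - N1%:Z)%:~R + (l%:Z - N2%:Z)%:~R + (m%:Z - N3%:Z)%:~R) * t +
             ((k%:Z - N1%:Z)%:~R * a + (l%:Z - N2%:Z)%:~R * b + (m%:Z - N3%:Z)%:~R * c))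
     - complex.Im (q (k%:Z - N1%:Z) (l%:Z - N2%:Z) (m%:Z - N3%:Z)) *
        sin (((k%:Z - N1%:Z)%:~R + (l%:Z - N2%:Z)%:~R + (m%:Z - N3%:Z)%:~R) * t +
             ((k%:Z - N1%:Z)%:~R * a + (l%:Z - N2%:Z)%:~R * b + (m%:Z - N3%:Z)%:~R * c)))).
  apply/funext => t; rewrite hq.
  apply: eq_bigr => k _; apply: eq_bigr => l _; apply: eq_bigr => m _.
  by congr (_ * cos _ - _ * sin _); ring.
apply: continuous_big; [exact: add_continuous| move=> k _]. apply: continuous_big; [exact: add_continuous| move=> l _]. apply: continuous_big; [exact: add_continuous| move=> m _].
move=> p; exact: cont_term.
Qed.

Lemma trig_nonneg_box N1 N2 N3 (f : fun3 R) : trig_poly N1 N2 N3 f ->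
  (forall a b c, 0 < a < pi *+ 2 -> 0 < b < pi *+ 2 -> 0 < c < pi *+ 2 -> 0 <= f a b c) ->
  nonneg3 f.
Proof.
move=> tf hpos.
suff hbox : forall a b c, 0 <= a < pi *+ 2 -> 0 <= b < pi *+ 2 -> 0 <= c < pi *+ 2 ->
    0 <= f a b c.
  move=> a b c.
  have [a' [ha' ea]] := expi_rep a; have [b' [hb' eb]] := expi_rep b.
  have [c' [hc' ec]] := expi_rep c.
  by rewrite -(trig_expi_eq tf ea eb ec); apply: hbox.
move=> a b c /andP[a0 a1] /andP[b0 b1] /andP[c0 c1].
set e := Num.min (pi *+ 2 - a) (Num.min (pi *+ 2 - b) (pi *+ 2 - c)).
have e0 : 0 < e by rewrite /e !lt_min !subr_gt0 a1 b1 c1.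
have hc := (@trig_cont N1 N2 N3 f a b c tf 0).
have hr := cvg_at_right_filter hc.
rewrite -[a]addr0 -[b]addr0 -[c]addr0.
apply: (cvgr_to_ge hr).
near=> t.
have t0 : 0 < t by near: t; exact: nbhs_right_gt.
have te : t < e by near: t; exact: nbhs_right_lt.
move: te; rewrite /e !lt_min !ltrBrDl => /and3P[ta tb tc].
apply: hpos; apply/andP; split => //.
- by apply: (le_lt_trans a0); rewrite ltrDl.
- by apply: (le_lt_trans b0); rewrite ltrDl.
- by apply: (le_lt_trans c0); rewrite ltrDl.
Unshelve. all: by end_near.
Qed.

End Cont.

Section Sigma.
Variable R : realType.
Variables N1 N2 N3 : nat.
Local Notation Cal := (@calderon R N1 N2 N3).

Lemma calpha_onto (a : R) : 0 < a < pi *+ 2 -> exists x, calpha x = a.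
Proof.
move=> /andP[a0 a1]; exists (tan ((pi - a) / 2)).
rewrite /calpha tanK; first by field; rewrite ?pnatr_eq0.
rewrite in_itv /=; apply/andP; split.
- rewrite -mulNr ltr_pM2r ?invr_gt0 ?ltr0n //; move: a1; rewrite mulr2n; lra.
- by rewrite ltr_pM2r ?invr_gt0 ?ltr0n //; lra.
Qed.

Lemma fac_gt0 (x y z : R) : 0 < (x ^+ 2 + 1) ^+ N1 * (y ^+ 2 + 1) ^+ N2 * (z ^+ 2 + 1) ^+ N3.
Proof.
have h t : 0 < (t ^+ 2 + 1 : R) by rewrite ltr_wpDl ?sqr_ge0.
by rewrite !mulr_gt0 // exprn_gt0.
Qed.

Lemma sigma_back (f : fun3 R) : trig_poly N1 N2 N3 f ->
  (forall x y z, 0 <= Cal f x y z) -> nonneg3 f.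
Proof.
move=> tf hc; apply: (trig_nonneg_box tf) => a b c ha hb hc'.
have [x <-] := calpha_onto ha; have [y <-] := calpha_onto hb.
have [z <-] := calpha_onto hc'.
have := hc x y z; rewrite /calderon pmulr_rge0 //; exact: fac_gt0.
Qed.

Lemma calderon_inj (f g : fun3 R) : trig_poly N1 N2 N3 f -> trig_poly N1 N2 N3 g ->
  Cal f = Cal g -> f = g.
Proof.
move=> tf tg e.
have th : trig_poly N1 N2 N3 (fun a b c => f a b c + (-1) * g a b c).
  by apply: trig_add => //; apply: trig_scale.
have c0 : forall x y z, Cal (fun a b c => f a b c + (-1) * g a b c) x y z = 0.
  move=> x y z; have ex := congr1 (fun h => h x y z) e; rewrite /calderon /= in ex.
  by rewrite /calderon mulrDr ex; ring.
have h1 : nonneg3 (fun a b c => f a b c + (-1) * g a b c) by apply: (sigma_back th) => x y z; rewrite c0.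
have th' : trig_poly N1 N2 N3 (fun a b c => (-1) * (f a b c + (-1) * g a b c)).
  exact: trig_scale.
have h2 : nonneg3 (fun a b c => (-1) * (f a b c + (-1) * g a b c)).
  apply: (sigma_back th') => x y z.
  have := c0 x y z; rewrite /calderon => e'.
  by rewrite mulrCA e' mulr0.
apply/funext => a; apply/funext => b; apply/funext => c.
have := h1 a b c; have := h2 a b c; lra.
Qed.

Lemma sigma_surj (p : fun3 R) : sigmaP (2 * N1) (2 * N2) (2 * N3) p ->
  exists2 f, sigmaT N1 N2 N3 f & Cal f = p.
Proof.
move=> [[a ha] pnn].
pose f := fun al be ga : R => \sum_(i < (2 * N1).+1) \sum_(j < (2 * N2).+1)
  \sum_(h < (2 * N3).+1) a i j h * (hT (2 * N1) i al * hT (2 * N2) j be * hT (2 * N3) h ga).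
have tf : trig_poly N1 N2 N3 f.
  apply: trig_sum => i; apply: trig_sum => j; apply: trig_sum => h.
  apply: trig_scale; apply: trig_prod; apply: trig1_hT; by rewrite -ltnS.
have ef : Cal f = p.
  apply/funext => x; apply/funext => y; apply/funext => z.
  rewrite ha /calderon /f mulr_sumr; apply: eq_bigr => i _.
  rewrite mulr_sumr; apply: eq_bigr => j _.
  rewrite mulr_sumr; apply: eq_bigr => h _.
  rewrite -(@hT_calpha2 R N1 i x) ?(ltnSE (ltn_ord i)) //.
  rewrite -(@hT_calpha2 R N2 j y) ?(ltnSE (ltn_ord j)) //.
  rewrite -(@hT_calpha2 R N3 h z) ?(ltnSE (ltn_ord h)) //.
  ring.
exists f => //; split => //.
by apply: sigma_back => // x y z; rewrite ef.
Qed.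

Lemma Cal_add (f g : fun3 R) : Cal (Defs.addf f g) = Defs.addf (Cal f) (Cal g).
Proof.
apply/funext => x; apply/funext => y; apply/funext => z.
rewrite /calderon /Defs.addf; ring.
Qed.

Lemma Cal_scale (r : R) (f : fun3 R) : Cal (Defs.scalef r f) = Defs.scalef r (Cal f).
Proof.
apply/funext => x; apply/funext => y; apply/funext => z.
rewrite /calderon /Defs.scalef; ring.
Qed.

Lemma Cal_nonneg (f : fun3 R) : nonneg3 f -> nonneg3 (Cal f).
Proof.
move=> nf x y z; rewrite /calderon; apply: mulr_ge0; last exact: nf.
exact: ltW (fac_gt0 x y z).
Qed.

Lemma sigma_image : Cal @` sigmaT N1 N2 N3 = sigmaP (2 * N1) (2 * N2) (2 * N3).
Proof.
apply/seteqP; split.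
- move=> _ [f [tf nf] <-]; split; first exact: trig_calderon.
  exact: Cal_nonneg.
- move=> p hp; have [f sf ef] := sigma_surj hp; by exists f.
Qed.

Lemma sigma_part : maps_extremal_onto Cal (sigmaT N1 N2 N3) (sigmaP (2 * N1) (2 * N2) (2 * N3)).
Proof.
apply: (@abstract_maps R Cal (@trig_poly R N1 N2 N3)).
- exact: Cal_add.
- exact: Cal_scale.
- by move=> f [].
- by move=> f g tf tg; apply: trig_add.
- by move=> c f tf; apply: trig_scale.
- exact: calderon_inj.
- exact: sigma_image.
Qed.

End Sigma.

Section Deg.
Variable R : realType.

Lemma uni_bound (A N : nat) (c d : nat -> R) :
  (forall x, (\sum_(k < A.+1) c k * x ^+ k) ^+ 2 <= \sum_(k < (2 * N)%N.+1) d k * x ^+ k) ->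
  forall x, \sum_(k < A.+1) c k * x ^+ k =
            \sum_(k < N.+1) (if (k < A.+1)%N then c k else 0) * x ^+ k.
Proof.
move=> h x.
pose P := \poly_(k < A.+1) c k; pose Q := \poly_(k < (2 * N)%N.+1) d k.
have hP t : P.[t] = \sum_(k < A.+1) c k * t ^+ k by rewrite horner_poly.
have hQ t : Q.[t] = \sum_(k < (2 * N)%N.+1) d k * t ^+ k by rewrite horner_poly.
have sP : (size P <= N.+1)%N.
  rewrite leqNgt; apply/negP => lt.
  have Pnz : P != 0 by rewrite -size_poly_eq0 -lt0n (leq_trans _ lt).
  have lP : 0 < lead_coef P ^+ 2.
    by rewrite lt_def sqr_ge0 sqrf_eq0 lead_coef_eq0 Pnz.
  have sPP : size (P * P) = (size P + size P)%N.-1 by rewrite size_mul.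
  have sQ : (size (- Q) < size (P * P)%R)%N.
    have sQ' : (size Q <= (2 * N)%N.+1)%N by exact: size_poly.
    rewrite size_polyN sPP; move: lt sQ'; case: (size P) => // n; rewrite addSn /= => l1 l2; apply: (leq_ltn_trans l2); lia.
  have lS : lead_coef (P * P - Q) = lead_coef P ^+ 2.
    by rewrite lead_coefDl // lead_coefM expr2.
  have lS0 : 0 < lead_coef (P * P - Q) by rewrite lS.
  have [n hn] := poly_pinfty_gt_lc lS0.
  have := hn n (lexx _); rewrite lS hornerD hornerN hornerM hP hQ.
  have := h n; rewrite expr2; lra.
rewrite -hP (horner_coef_wide _ sP); apply: eq_bigr => k _.
by rewrite coef_poly.
Qed.


Lemma xstep (A B Cc N B' C' : nat) (F p : fun3 R) :
  poly3 A B Cc F -> poly3 (2 * N)%N B' C' p ->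
  (forall x y z, F x y z ^+ 2 <= p x y z) -> poly3 N B Cc F.
Proof.
move=> [a ha] [b hb] hle.
exists (fun k l m => if (k < A.+1)%N then a k l m else 0) => x y z.
pose c := fun k => \sum_(l < B.+1) \sum_(m < Cc.+1) a k l m * y ^+ l * z ^+ m.
pose d := fun k => \sum_(l < B'.+1) \sum_(m < C'.+1) b k l m * y ^+ l * z ^+ m.
have eF : forall t, F t y z = \sum_(k < A.+1) c k * t ^+ k.
  move=> t; rewrite ha; apply: eq_bigr => k _; rewrite /c mulr_suml.
  apply: eq_bigr => l _; rewrite mulr_suml; apply: eq_bigr => m _; ring.
have ep : forall t, p t y z = \sum_(k < (2 * N)%N.+1) d k * t ^+ k.
  move=> t; rewrite hb; apply: eq_bigr => k _; rewrite /d mulr_suml.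
  apply: eq_bigr => l _; rewrite mulr_suml; apply: eq_bigr => m _; ring.
have hu : forall t, (\sum_(k < A.+1) c k * t ^+ k) ^+ 2 <=
                    \sum_(k < (2 * N)%N.+1) d k * t ^+ k.
  by move=> t; rewrite -eF -ep; exact: hle.
rewrite eF (uni_bound hu x); apply: eq_bigr => k _.
case: ifP => hk.
  rewrite /c mulr_suml; apply: eq_bigr => l _; rewrite mulr_suml.
  apply: eq_bigr => m _; ring.
rewrite mul0r big1 // => l _; rewrite big1 // => m _; by rewrite !mul0r.
Qed.

Lemma poly3_swap12 A B Cc (F : fun3 R) : poly3 A B Cc F ->
  poly3 B A Cc (fun x y z => F y x z).
Proof.
move=> [a ha]; exists (fun k l m => a l k m) => x y z.
rewrite ha exchange_big; apply: eq_bigr => k _; apply: eq_bigr => l _.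
apply: eq_bigr => m _; ring.
Qed.

Lemma poly3_swap13 A B Cc (F : fun3 R) : poly3 A B Cc F ->
  poly3 Cc B A (fun x y z => F z y x).
Proof.
move=> [a ha]; exists (fun k l m => a m l k) => x y z.
rewrite ha.
under eq_bigr => k _ do rewrite exchange_big.
rewrite exchange_big; apply: eq_bigr => m _.
rewrite exchange_big; apply: eq_bigr => l _; apply: eq_bigr => k _; ring.
Qed.

Lemma degree_bound (A B Cc N1 N2 N3 : nat) (F p : fun3 R) :
  poly3 A B Cc F -> poly3 (2 * N1)%N (2 * N2)%N (2 * N3)%N p ->
  (forall x y z, F x y z ^+ 2 <= p x y z) -> poly3 N1 N2 N3 F.
Proof.
move=> hF hp hle.
have h1 := xstep hF hp hle.
have h2 := xstep (poly3_swap12 h1) (poly3_swap12 hp) (fun x y z => hle y x z).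
have h2' := poly3_swap12 h2.
have h3 := xstep (poly3_swap13 h2') (poly3_swap13 hp) (fun x y z => hle z y x).
exact: (poly3_swap13 h3).
Qed.

End Deg.

Section Ana.
Variable R : realType.
Local Notation C := R[i].

Definition an1 (N : nat) (u : R -> C) := exists c : nat -> C, forall a,
  u a = \sum_(k < N.+1) c k * expi (k%:R * a).

Lemma atrig_ext N1 N2 N3 (F G : R -> R -> R -> C) : (forall a b c, F a b c = G a b c) ->
  atrig_poly N1 N2 N3 F -> atrig_poly N1 N2 N3 G.
Proof. by move=> e [q hq]; exists q => a b c; rewrite -e. Qed.

Lemma atrig_zero N1 N2 N3 : @atrig_poly R N1 N2 N3 (fun _ _ _ => 0).
Proof.
exists (fun _ _ _ => 0) => a b c.
rewrite big1 // => k _; rewrite big1 // => l _; rewrite big1 // => m _.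
by rewrite mul0r.
Qed.

Lemma atrig_add N1 N2 N3 (F G : R -> R -> R -> C) :
  atrig_poly N1 N2 N3 F -> atrig_poly N1 N2 N3 G ->
  atrig_poly N1 N2 N3 (fun a b c => F a b c + G a b c).
Proof.
move=> [q hq] [p hp]; exists (fun k l m => q k l m + p k l m) => a b c.
rewrite hq hp -big_split; apply: eq_bigr => k _.
rewrite -big_split; apply: eq_bigr => l _.
rewrite -big_split; apply: eq_bigr => m _.
by rewrite mulrDl.
Qed.

Lemma atrig_scale N1 N2 N3 (r : C) (F : R -> R -> R -> C) : atrig_poly N1 N2 N3 F ->
  atrig_poly N1 N2 N3 (fun a b c => r * F a b c).
Proof.
move=> [q hq]; exists (fun k l m => r * q k l m) => a b c.
rewrite hq mulr_sumr; apply: eq_bigr => k _.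
rewrite mulr_sumr; apply: eq_bigr => l _.
rewrite mulr_sumr; apply: eq_bigr => m _.
by rewrite mulrA.
Qed.

Lemma atrig_sum N1 N2 N3 n (F : 'I_n -> R -> R -> R -> C) :
  (forall i, atrig_poly N1 N2 N3 (F i)) ->
  atrig_poly N1 N2 N3 (fun a b c => \sum_(i < n) F i a b c).
Proof.
elim: n F => [|n IH] F hF.
  by apply: (atrig_ext _ (atrig_zero N1 N2 N3)) => a b c; rewrite big_ord0.
apply: (atrig_ext _ (atrig_add (IH (fun i => F (widen_ord (leqnSn n) i)) _) (hF ord_max))).
  by move=> a b c; rewrite big_ord_recr.
by move=> i; apply: hF.
Qed.

Lemma atrig_prod N1 N2 N3 (u v w : R -> C) :
  an1 N1 u -> an1 N2 v -> an1 N3 w ->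
  atrig_poly N1 N2 N3 (fun a b c => u a * v b * w c).
Proof.
move=> [c1 h1] [c2 h2] [c3 h3].
exists (fun k l m => c1 k * c2 l * c3 m) => a b c.
rewrite h1 h2 h3 !mulr_suml; apply: eq_bigr => k _.
rewrite -mulrA mulr_suml mulr_sumr; apply: eq_bigr => l _.
rewrite mulrA mulr_sumr; apply: eq_bigr => m _.
rewrite !expiD; ring.
Qed.

Definition uA (N i : nat) (a : R) : C := expi (N%:R * (a / 2)) * (hT N i a)%:C.

Lemma an1_uA N i : (i <= N)%N -> an1 N (uA N i).
Proof.
move=> iN; have [c hc] := hT_analytic R iN; exists c => a.
by rewrite /uA hc mulrA [expi _ * _]mulrC expiNK mul1r.
Qed.

Lemma norm_expi (t : R) : `|expi t| = 1.
Proof. by rewrite normc_def /= cos2Dsin2 sqrtr1. Qed.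

Lemma norm_rc (r : R) : 0 <= r -> `|r%:C| = r%:C :> C.
Proof.
by move=> r0; rewrite normc_def /= expr0n /= addr0 sqrtr_sqr ger0_norm.
Qed.

Lemma normsq_rc (r : R) : `|r%:C| ^+ 2 = (r ^+ 2)%:C :> C.
Proof.
rewrite normc_def /= expr0n /= addr0 -rcX sqr_sqrtr //; exact: sqr_ge0.
Qed.

Lemma hT_mul N k k' (a : R) : (k <= N)%N -> (k' <= N)%N ->
  hT N k a * hT N k' a = hT (2 * N) (k + k') a.
Proof.
move=> hk hk'; rewrite /hT.
have -> : (2 * N - (k + k') = (N - k) + (N - k'))%N by lia.
rewrite !exprD; ring.
Qed.

Lemma rrN_sq (x : R) N : (rr x ^+ N) ^+ 2 = (x ^+ 2 + 1) ^+ N.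
Proof. by rewrite -exprM mulnC rr_pow2. Qed.

Lemma expi_an (k N : nat) (a : R) :
  expi (- (N%:R * (a / 2))) * expi (k%:R * a) = expi ((k%:R - N%:R / 2) * a).
Proof. by rewrite -expiD; congr expi; field; rewrite ?pnatr_eq0. Qed.

End Ana.

Section QPart.
Variable R : realType.
Variables N1 N2 N3 : nat.
Local Notation C := R[i].
Local Notation Cal := (@calderon R N1 N2 N3).

Definition Gf (F : R -> R -> R -> C) (x y z : R) : C :=
  ((rr x ^+ N1 * rr y ^+ N2 * rr z ^+ N3)%:C *
   expi (- (N1%:R * (calpha x / 2))) * expi (- (N2%:R * (calpha y / 2))) *
   expi (- (N3%:R * (calpha z / 2)))) * F (calpha x) (calpha y) (calpha z).

Lemma Gf_cpoly F : atrig_poly N1 N2 N3 F -> cpoly3 N1 N2 N3 (Gf F).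
Proof.
move=> [q hq].
pose S := fun x y z : R => \sum_(k < N1.+1) \sum_(l < N2.+1) \sum_(m < N3.+1)
   q k l m * ((Pk R k N1).[x%:C] * (Pk R l N2).[y%:C] * (Pk R m N3).[z%:C]).
have e : forall x y z, S x y z = Gf F x y z.
  move=> x y z; rewrite /Gf /S hq mulr_sumr; apply: eq_bigr => k _.
  rewrite mulr_sumr; apply: eq_bigr => l _.
  rewrite mulr_sumr; apply: eq_bigr => m _.
  have hk : (k <= N1)%N by rewrite -ltnS.
  have hl : (l <= N2)%N by rewrite -ltnS.
  have hm : (m <= N3)%N by rewrite -ltnS.
  rewrite -(Pk_calpha x hk) -(Pk_calpha y hl) -(Pk_calpha z hm) -!expi_an !expiD !rcM.
  ring.
apply: (cpoly3_ext e).
apply: cpoly3_sum => k; apply: cpoly3_sum => l; apply: cpoly3_sum => m.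
apply: cpoly3_scale; apply: cpoly3_prod; apply: size_Pk.
- by rewrite -ltnS.
- by rewrite -ltnS.
- by rewrite -ltnS.
Qed.

Lemma Gf_norm F x y z :
  `|Gf F x y z| ^+ 2 = ((x ^+ 2 + 1) ^+ N1 * (y ^+ 2 + 1) ^+ N2 * (z ^+ 2 + 1) ^+ N3)%:C *
                       `|F (calpha x) (calpha y) (calpha z)| ^+ 2.
Proof.
rewrite /Gf !normrM !norm_expi !mulr1 exprMn normsq_rc !exprMn !rrN_sq.
by [].
Qed.

Lemma QT_QP (f : fun3 R) : QT N1 N2 N3 f -> QP (2 * N1) (2 * N2) (2 * N3) (Cal f).
Proof.
move=> [[tf nf] [r [F [hF hf]]]].
split; first by split; [exact: trig_calderon| exact: Cal_nonneg].
pose G := fun j => Gf (F j).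
have cG : forall j, cpoly3 N1 N2 N3 (G j) by move=> j; apply: Gf_cpoly.
exists (r + r)%N.
exists (fun j => match fintype.split j with
         | inl a => fun x y z => complex.Re (G a x y z)
         | inr b => fun x y z => complex.Im (G b x y z) end).
split.
  move=> j; case: (fintype.split j) => a; exists N1, N2, N3.
  - exact: cpoly3_Re.
  - exact: cpoly3_Im.
move=> x y z; rewrite big_split_ord /=.
under eq_bigr => j _ do rewrite (unsplitK (inl _ j)).
under [X in _ = _ + X]eq_bigr => j _ do rewrite (unsplitK (inr _ j)).
rewrite -big_split /=.
apply: (@complexI R); rewrite rc_sum.
under eq_bigr => j _ do rewrite add_Re2_Im2.
rewrite /G; under eq_bigr => j _ do rewrite Gf_norm.
rewrite -mulr_sumr -hf /calderon !rcM.
by [].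
Qed.


Lemma trig_H2 (A0 : nat -> nat -> nat -> R) :
  trig_poly N1 N2 N3 (fun al be ga =>
    (\sum_(k < N1.+1) \sum_(l < N2.+1) \sum_(m < N3.+1)
       A0 k l m * (hT N1 k al * hT N2 l be * hT N3 m ga)) ^+ 2).
Proof.
pose T := fun al be ga : R =>
  \sum_(k < N1.+1) \sum_(l < N2.+1) \sum_(m < N3.+1)
  \sum_(k' < N1.+1) \sum_(l' < N2.+1) \sum_(m' < N3.+1)
    (A0 k l m * A0 k' l' m') *
    (hT (2 * N1) (k + k') al * hT (2 * N2) (l + l') be * hT (2 * N3) (m + m') ga).
have e : forall al be ga, T al be ga =
    (\sum_(k < N1.+1) \sum_(l < N2.+1) \sum_(m < N3.+1)
       A0 k l m * (hT N1 k al * hT N2 l be * hT N3 m ga)) ^+ 2.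
  move=> al be ga; rewrite /T expr2.
  rewrite mulr_suml; apply: eq_bigr => k _.
  rewrite mulr_suml; apply: eq_bigr => l _.
  rewrite mulr_suml; apply: eq_bigr => m _.
  rewrite mulr_sumr; apply: eq_bigr => k' _.
  rewrite mulr_sumr; apply: eq_bigr => l' _.
  rewrite mulr_sumr; apply: eq_bigr => m' _.
  rewrite -!hT_mul ?(ltnSE (ltn_ord k)) ?(ltnSE (ltn_ord k')) ?(ltnSE (ltn_ord l))
    ?(ltnSE (ltn_ord l')) ?(ltnSE (ltn_ord m)) ?(ltnSE (ltn_ord m')) //.
  ring.
apply: (trig_ext e).
apply: trig_sum => k; apply: trig_sum => l; apply: trig_sum => m.
apply: trig_sum => k'; apply: trig_sum => l'; apply: trig_sum => m'.
apply: trig_scale; apply: trig_prod; apply: trig1_hT.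
- by move: (ltn_ord k) (ltn_ord k'); rewrite !ltnS; lia.
- by move: (ltn_ord l) (ltn_ord l'); rewrite !ltnS; lia.
- by move: (ltn_ord m) (ltn_ord m'); rewrite !ltnS; lia.
Qed.

Lemma QP_QT (p : fun3 R) : QP (2 * N1) (2 * N2) (2 * N3) p ->
  exists2 f, QT N1 N2 N3 f & Cal f = p.
Proof.
move=> [[hp pnn] [r [F [hpoly hp2]]]].
have hb : forall j, poly3 N1 N2 N3 (F j).
  move=> j; have [D1 [D2 [D3 hD]]] := hpoly j.
  apply: (degree_bound hD hp) => x y z.
  rewrite hp2 (bigD1 j) //= lerDl; apply: sumr_ge0 => i _; exact: sqr_ge0.
have [A hA] := @choice _ _ (fun j (a : nat -> nat -> nat -> R) => forall x y z,
   F j x y z = \sum_(k < N1.+1) \sum_(l < N2.+1) \sum_(m < N3.+1)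
                  a k l m * x ^+ k * y ^+ l * z ^+ m) hb.
pose H := fun j al be ga => \sum_(k < N1.+1) \sum_(l < N2.+1) \sum_(m < N3.+1)
   A j k l m * (hT N1 k al * hT N2 l be * hT N3 m ga).
pose f := fun al be ga : R => \sum_(j < r) (H j al be ga) ^+ 2.
have tf : trig_poly N1 N2 N3 f by apply: trig_sum => j; exact: trig_H2.
have ef : Cal f = p.
  apply/funext => x; apply/funext => y; apply/funext => z.
  rewrite hp2 /calderon /f mulr_sumr; apply: eq_bigr => j _.
  have eH : rr x ^+ N1 * rr y ^+ N2 * rr z ^+ N3 * H j (calpha x) (calpha y) (calpha z)
            = F j x y z.
    rewrite hA /H mulr_sumr; apply: eq_bigr => k _.
    rewrite mulr_sumr; apply: eq_bigr => l _.
    rewrite mulr_sumr; apply: eq_bigr => m _.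
    rewrite -(hT_calpha x (ltnSE (ltn_ord k))) -(hT_calpha y (ltnSE (ltn_ord l))).
    rewrite -(hT_calpha z (ltnSE (ltn_ord m))); ring.
  by rewrite -eH -!rrN_sq; ring.
exists f => //; split.
  split => // a b c; apply: sumr_ge0 => j _; exact: sqr_ge0.
exists r, (fun j al be ga => expi (N1%:R * (al / 2)) * expi (N2%:R * (be / 2)) *
   expi (N3%:R * (ga / 2)) * (H j al be ga)%:C).
split.
  move=> j.
  pose S := fun al be ga => \sum_(k < N1.+1) \sum_(l < N2.+1) \sum_(m < N3.+1)
     (A j k l m)%:C * (uA N1 k al * uA N2 l be * uA N3 m ga).
  have e : forall al be ga, S al be ga = expi (N1%:R * (al / 2)) * expi (N2%:R * (be / 2)) *
      expi (N3%:R * (ga / 2)) * (H j al be ga)%:C.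
    move=> al be ga; rewrite /S /H rc_sum mulr_sumr; apply: eq_bigr => k _.
    rewrite rc_sum mulr_sumr; apply: eq_bigr => l _.
    rewrite rc_sum mulr_sumr; apply: eq_bigr => m _.
    rewrite /uA !rcM; ring.
  apply: (atrig_ext e).
  apply: atrig_sum => k; apply: atrig_sum => l; apply: atrig_sum => m.
  apply: atrig_scale; apply: atrig_prod; apply: an1_uA; by rewrite -ltnS.
move=> a b c; rewrite /f rc_sum; apply: eq_bigr => j _.
by rewrite !normrM !norm_expi !mul1r normsq_rc.
Qed.

Lemma Q_image : Cal @` QT N1 N2 N3 = QP (2 * N1) (2 * N2) (2 * N3).
Proof.
apply/seteqP; split.
- by move=> _ [f hf <-]; apply: QT_QP.
- move=> p hp; have [f hf ef] := QP_QT hp; by exists f.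
Qed.

Lemma Q_part : maps_extremal_onto Cal (QT N1 N2 N3) (QP (2 * N1) (2 * N2) (2 * N3)).
Proof.
apply: (@abstract_maps R Cal (@trig_poly R N1 N2 N3)).
- exact: Cal_add.
- exact: Cal_scale.
- by move=> f [[]].
- by move=> f g tf tg; apply: trig_add.
- by move=> c f tf; apply: trig_scale.
- exact: calderon_inj.
- exact: Q_image.
Qed.

End QPart.

Theorem corollary8' (R : realType) (N1 N2 N3 : nat) :
  maps_extremal_onto (@calderon R N1 N2 N3)
    (@sigmaT R N1 N2 N3) (@sigmaP R (2 * N1) (2 * N2) (2 * N3)) /\
  maps_extremal_onto (@calderon R N1 N2 N3)
    (@QT R N1 N2 N3) (@QP R (2 * N1) (2 * N2) (2 * N3)).
Proof. split; [exact: sigma_part | exact: Q_part]. Qed.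


End Helpers.

Theorem corollary8 (R : realType) (N1 N2 N3 : nat) :
  maps_extremal_onto (@calderon R N1 N2 N3)
    (@sigmaT R N1 N2 N3) (@sigmaP R (2 * N1) (2 * N2) (2 * N3)) /\
  maps_extremal_onto (@calderon R N1 N2 N3)
    (@QT R N1 N2 N3) (@QP R (2 * N1) (2 * N2) (2 * N3)).
Proof. exact: (Helpers.corollary8' R N1 N2 N3). Qed.
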